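(* Let $d\ge1$, $n\in\mathbb{N}$, and let $R(n)$ be the range of $n$ steps of simple symmetric random walk on $\mathbb{Z}^d$ started at $0$. Then $$H(R(n))\ge -\log\Big(1-\frac{1}{2d}\Big)\cdot \mathbb{E}\big[|\partial R(n)|-1\big].$$
   Context: $H(X)=\mathbb{E}[-\log p(X)]$ with $p(x)=\Pr[X=x]$, logarithms base $2$. The inner boundary of $A\subset\mathbb{Z}^d$ is $\partial A=\{z\in A : z \text{ is at graph distance } 1 \text{ from some vertex of } \mathbb{Z}^d\setminus A\}$. The range is $R(n)=\{S(0),\ldots,S(n)\}$. *)

(* Defs.v *)
From Stdlib Require Import Reals ZArith List.
Import ListNotations.
Open Scope R_scope.

(* Points of Z^d are lists of integers of length d. *)
Definition point := list Z.

Definition origin (d : nat) : point := repeat 0%Z d.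

(* A step is a pair (coordinate i < d, sign): true = +e_i, false = -e_i. *)
Definition step := (nat * bool)%type.

Definition steps (d : nat) : list step := list_prod (seq 0 d) [true; false].

Fixpoint upd (x : point) (i : nat) (delta : Z) : point :=
  match x, i with
  | [], _ => []
  | a :: x', O => (a + delta)%Z :: x'
  | a :: x', S i' => a :: upd x' i' delta
  end.

Definition move (x : point) (s : step) : point :=
  upd x (fst s) (if snd s then 1%Z else (-1)%Z).

(* all step sequences of length n: the (2d)^n equally likely walk paths *)
Fixpoint paths (d n : nat) : list (list step) :=
  match n with
  | O => [[]]
  | S m => flat_map (fun p => map (fun s => s :: p) (steps d)) (paths d m)
  end.

Fixpoint walk_pts (x : point) (p : list step) : list point :=
  match p with
  | [] => [x]
  | s :: p' => x :: walk_pts (move x s) p'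
  end.

(* the range R(n) (as a list, possibly with repetitions) *)
Definition range (d : nat) (p : list step) : list point := walk_pts (origin d) p.

Definition inb (x : point) (l : list point) : bool :=
  existsb (fun y => if list_eq_dec Z.eq_dec x y then true else false) l.

Definition same_set (l1 l2 : list point) : bool :=
  forallb (fun x => inb x l2) l1 && forallb (fun x => inb x l1) l2.

Definition boundary_size (d : nat) (A : list point) : nat :=
  length (filter (fun z => existsb (fun s => negb (inb (move z s) A)) (steps d))
                 (nodup (list_eq_dec Z.eq_dec) A)).

Definition log2 (x : R) : R := ln x / ln 2.

Definition rsum {A : Type} (f : A -> R) (l : list A) : R :=
  fold_right Rplus 0 (map f l).

Definition npaths (d n : nat) : R := INR (length (paths d n)).

Definition prob_range (d n : nat) (p : list step) : R :=
  INR (length (filter (fun q => same_set (range d q) (range d p)) (paths d n)))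
  / npaths d n.

(* H(R(n)) = E[-log2 p(R(n))] *)
Definition range_entropy (d n : nat) : R :=
  rsum (fun p => / npaths d n * (- log2 (prob_range d n p))) (paths d n).

Definition exp_boundary_minus1 (d n : nat) : R :=
  rsum (fun p => / npaths d n * (INR (boundary_size d (range d p)) - 1)) (paths d n).

(* Main.v *)
Require Import Defs.
From Stdlib Require Import Reals ZArith List Lia Lra.
Import ListNotations.
Open Scope bool_scope.
Open Scope R_scope.

Definition all_in (L l : list point) : bool := forallb (fun z => inb z l) L.
Definition kk (B V : list point) : nat := length (filter (fun z => negb (inb z V)) B).
Definition cnt (d : nat) (A B V : list point) (x : point) (n : nat) : nat :=
  length (filter (fun p => all_in (walk_pts x p) A && all_in B (V ++ walk_pts x p)) (paths d n)).
Fixpoint nsum {T} (f : T -> nat) (l : list T) : nat :=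
  match l with [] => 0%nat | a :: l' => (f a + nsum f l')%nat end.

Lemma inb_In x l : inb x l = true <-> In x l.
Proof.
  unfold inb; rewrite existsb_exists; split.
  - intros [y [Hy Hb]]; destruct (list_eq_dec Z.eq_dec x y); [subst; auto|discriminate].
  - intros H; exists x; split; auto; destruct (list_eq_dec Z.eq_dec x x); auto.
Qed.

Lemma inb_false x l : inb x l = false <-> ~ In x l.
Proof.
  rewrite <- inb_In; destruct (inb x l); split; intros; try congruence; auto.
Qed.

Lemma filter_mono {T} (f g : T -> bool) l :
  (forall a, f a = true -> g a = true) -> (length (filter f l) <= length (filter g l))%nat.
Proof.
  intros H; induction l as [|a l IH]; simpl; auto.
  destruct (f a) eqn:E; [rewrite (H a E); simpl; lia|destruct (g a); simpl; lia].
Qed.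

Lemma len_filter_false {T} (l : list T) : length (filter (fun _ => false) l) = 0%nat.
Proof. induction l; simpl; auto. Qed.

Lemma len_filter_map {T} (P : list T -> bool) (S : list T) p :
  length (filter P (map (fun s => s :: p) S)) = nsum (fun s => if P (s :: p) then 1%nat else 0%nat) S.
Proof. induction S; simpl; auto; destruct (P (a :: p)); simpl; lia. Qed.

Lemma nsum_add {T} (f g : T -> nat) l : nsum (fun x => f x + g x)%nat l = (nsum f l + nsum g l)%nat.
Proof. induction l; simpl; lia. Qed.

Lemma nsum_zero {T} (l : list T) : nsum (fun _ => 0%nat) l = 0%nat.
Proof. induction l; simpl; lia. Qed.

Lemma len_filter_flat {T} (P : list T -> bool) (S : list T) L :
  length (filter P (flat_map (fun p => map (fun s => s :: p) S) L)) =
  nsum (fun s => length (filter (fun p => P (s :: p)) L)) S.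
Proof.
  induction L as [|p L IH]; simpl.
  - symmetry; apply nsum_zero.
  - rewrite filter_app, length_app, IH, len_filter_map, <- nsum_add.
    clear IH; induction S; simpl; auto. destruct (P (a :: p)); simpl; lia.
Qed.

Lemma len_paths_S d m P : length (filter P (paths d (S m))) =
  nsum (fun s => length (filter (fun p => P (s :: p)) (paths d m))) (steps d).
Proof. simpl; apply len_filter_flat. Qed.

Lemma len_flat {T} (S : list T) L :
  length (flat_map (fun p => map (fun s => s :: p) S) L) = (length L * length S)%nat.
Proof. induction L; simpl; auto; rewrite length_app, length_map, IHL; lia. Qed.

Lemma len_steps d : length (steps d) = (d * 2)%nat.
Proof. unfold steps. transitivity (length (seq 0 d) * length (true::false::nil))%nat. apply length_prod. rewrite length_seq; reflexivity. Qed.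

Lemma len_paths d n : length (paths d n) = ((d * 2) ^ n)%nat.
Proof. induction n; simpl; auto. rewrite len_flat, IHn, len_steps; lia. Qed.

Lemma INR_nsum {T} (f : T -> nat) l : INR (nsum f l) = rsum (fun x => INR (f x)) l.
Proof. induction l; simpl; auto. rewrite plus_INR, IHl; reflexivity. Qed.

Lemma rsum_le_const {T} (f : T -> R) M l :
  (forall s, In s l -> f s <= M) -> rsum f l <= INR (length l) * M.
Proof.
  induction l as [|a l IH]; intros H; unfold rsum in *; cbn [map fold_right length]; [simpl; lra|].
  rewrite S_INR. specialize (H a (or_introl eq_refl)) as Ha.
  assert (fold_right Rplus 0 (map f l) <= INR (length l) * M) by (apply IH; intros; apply H; right; auto). lra.
Qed.

Lemma rsum_le_strict {T} (f : T -> R) M l :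
  (forall s, In s l -> 0 <= f s <= M) -> (exists s, In s l /\ f s = 0) ->
  rsum f l <= (INR (length l) - 1) * M.
Proof.
  induction l as [|a l IH]; intros H [s [Hs Hf]]; [destruct Hs|].
  unfold rsum in *; cbn [map fold_right length]. rewrite S_INR.
  destruct Hs as [<-|Hs].
  - assert (fold_right Rplus 0 (map f l) <= INR (length l) * M)
      by (apply rsum_le_const; intros s' Hs'; apply (H s' (or_intror Hs'))). lra.
  - assert (fold_right Rplus 0 (map f l) <= (INR (length l) - 1) * M)
      by (apply IH; [intros s' Hs'; apply (H s' (or_intror Hs'))| exists s; auto]).
    specialize (H a (or_introl eq_refl)). lra.
Qed.

Lemma rsum_le {T} (f g : T -> R) l :
  (forall s, In s l -> f s <= g s) -> rsum f l <= rsum g l.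
Proof.
  induction l; intros H; unfold rsum in *; simpl; [lra|].
  assert (f a <= g a) by (apply H; left; auto). assert (fold_right Rplus 0 (map f l) <= fold_right Rplus 0 (map g l)) by (apply IHl; intros; apply H; right; auto). lra.
Qed.

Lemma rsum_scal {T} (f : T -> R) k l : rsum (fun x => k * f x) l = k * rsum f l.
Proof. induction l; unfold rsum in *; simpl; [ring|rewrite IHl; ring]. Qed.

Lemma kk_pos B V x : inb x B && negb (inb x V) = true -> (1 <= kk B V)%nat.
Proof.
  intros H; apply andb_prop in H as [H1 H2]. apply inb_In in H1.
  unfold kk. assert (In x (filter (fun z => negb (inb z V)) B)) by (apply filter_In; auto).
  destruct (filter _ B); simpl in *; [destruct H|lia].
Qed.

Lemma kk_cons B V x : NoDup B ->
  kk B (x :: V) = (kk B V - (if inb x B && negb (inb x V) then 1 else 0))%nat.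
Proof.
  induction B as [|a B IH]; intros HN; [reflexivity|].
  inversion HN; subst. specialize (IH H2).
  assert (Hk := kk_pos B V x).
  unfold kk in *; cbn [filter].
  change (inb a (x :: V)) with ((if list_eq_dec Z.eq_dec a x then true else false) || inb a V).
  change (inb x (a :: B)) with ((if list_eq_dec Z.eq_dec x a then true else false) || inb x B).
  destruct (list_eq_dec Z.eq_dec a x) as [->|Hne].
  - assert (inb x B = false) by (apply inb_false; auto).
    rewrite H in IH. simpl in IH.
    destruct (list_eq_dec Z.eq_dec x x); [|congruence]. simpl.
    destruct (inb x V); simpl; lia.
  - destruct (list_eq_dec Z.eq_dec x a); [congruence|]. cbn [orb].
    destruct (inb x B && negb (inb x V)) eqn:E.
    + specialize (Hk eq_refl). destruct (negb (inb a V)); cbn [length]; lia.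
    + destruct (negb (inb a V)); cbn [length]; lia.
Qed.

Lemma kk_base B V x : NoDup B -> all_in B (V ++ [x]) = true -> (kk B V <= 1)%nat.
Proof.
  intros HN H. unfold all_in in H. rewrite forallb_forall in H.
  unfold kk. assert (HL : NoDup (filter (fun z => negb (inb z V)) B)) by (apply NoDup_filter; auto).
  assert (Hall : forall z, In z (filter (fun z => negb (inb z V)) B) -> z = x).
  { intros z Hz. apply filter_In in Hz as [Hz1 Hz2].
    specialize (H z Hz1). apply inb_In in H. apply in_app_or in H.
    destruct (inb z V) eqn:E; [discriminate|]. apply inb_false in E.
    destruct H as [H|[H|[]]]; [contradiction|auto]. }
  destruct (filter _ B) as [|a [|b l]]; simpl; try lia.
  assert (a = x) by (apply Hall; simpl; auto). assert (b = x) by (apply Hall; simpl; auto).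
  subst. inversion HL; subst. exfalso; apply H2; simpl; auto.
Qed.

Lemma walk_head y p : exists w, walk_pts y p = y :: w.
Proof. destruct p; simpl; eauto. Qed.

Lemma cnt_bound d A B (hd : (1 <= d)%nat) (HN : NoDup B)
  (HB : forall z, In z B -> exists s, In s (steps d) /\ inb (move z s) A = false) :
  forall n V x, INR (cnt d A B V x n) <=
    (2 * INR d) ^ n * (1 - / (2 * INR d)) ^ (kk B V) / (1 - / (2 * INR d)).
Proof.
  set (c := 1 - / (2 * INR d)).
  assert (Hd : 1 <= INR d) by (apply (le_INR 1); auto).
  assert (Hc : 0 < c /\ c <= 1).
  { unfold c. assert (0 < / (2 * INR d) <= /2).
    { split; [apply Rinv_0_lt_compat; lra|apply Rinv_le_contravar; lra]. } lra. }
  induction n as [|m IH]; intros V x.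
  - unfold cnt; cbn [paths filter].
    match goal with |- context [if ?b then _ else _] => destruct b eqn:E end; cbn [length pow].
    + apply andb_prop in E as [_ E]. apply kk_base in E; auto.
      destruct (kk B V) as [|[|k]]; [|simpl|lia].
      * simpl. apply Rmult_le_reg_r with c; [lra|]. unfold Rdiv. rewrite Rmult_assoc, Rinv_l; lra.
      * unfold Rdiv. rewrite Rmult_1_r, Rmult_1_l, Rinv_r; lra.
    + simpl INR. unfold Rdiv. apply Rmult_le_pos; [apply Rmult_le_pos; [lra|apply pow_le; lra]|].
      left; apply Rinv_0_lt_compat; lra.
  - unfold cnt. rewrite len_paths_S, INR_nsum.
    set (M := (2 * INR d) ^ m * c ^ kk B (x :: V) / c).
    assert (HM : 0 <= M).
    { unfold M. apply Rmult_le_pos; [apply Rmult_le_pos; [apply pow_le; lra|apply pow_le; lra]|].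
      left; apply Rinv_0_lt_compat; lra. }
    assert (Hs : forall s, In s (steps d) ->
      0 <= INR (length (filter (fun p => all_in (walk_pts x (s :: p)) A &&
                 all_in B (V ++ walk_pts x (s :: p))) (paths d m))) <= M /\
      (inb (move x s) A = false -> INR (length (filter (fun p => all_in (walk_pts x (s :: p)) A &&
                 all_in B (V ++ walk_pts x (s :: p))) (paths d m))) = 0)).
    { intros s _. split; [split; [apply pos_INR|]|].
      - destruct (inb (move x s) A) eqn:EA.
        + eapply Rle_trans; [apply le_INR; apply (filter_mono _ (fun p => all_in (walk_pts (move x s) p) A && all_in B ((x :: V) ++ walk_pts (move x s) p)))|apply IH].
          intros p Hp. simpl in Hp. unfold all_in in *.
          apply andb_prop in Hp as [H1 H2]. simpl in H1. apply andb_prop in H1 as [_ H1].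
          rewrite H1; simpl. rewrite forallb_forall in *. intros z Hz.
          specialize (H2 z Hz). apply inb_In in H2. destruct (list_eq_dec Z.eq_dec z x); [reflexivity|]. simpl. apply inb_In.
          apply in_app_or in H2 as [H2|[H2|H2]]; [apply in_or_app; auto|congruence|apply in_or_app; auto].
        + eapply Rle_trans; [apply le_INR; apply (filter_mono _ (fun _ => false))|rewrite len_filter_false; simpl; lra].
          intros p Hp. simpl in Hp. destruct (walk_head (move x s) p) as [w Hw].
          rewrite Hw in Hp. unfold all_in in Hp. simpl in Hp. rewrite EA in Hp.
          rewrite Bool.andb_false_r in Hp. discriminate.
      - intros EA. apply Rle_antisym; [|apply pos_INR].
        eapply Rle_trans; [apply le_INR; apply (filter_mono _ (fun _ => false))|rewrite len_filter_false; simpl; lra].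
        intros p Hp. simpl in Hp. destruct (walk_head (move x s) p) as [w Hw].
        rewrite Hw in Hp. unfold all_in in Hp. simpl in Hp. rewrite EA in Hp.
        rewrite Bool.andb_false_r in Hp. discriminate. }
    destruct (inb x B && negb (inb x V)) eqn:E.
    + assert (Hk := kk_pos B V x E).
      destruct (HB x) as [s0 [Hs0 Hs0A]]. { apply andb_prop in E as [E _]. apply inb_In; auto. }
      eapply Rle_trans; [apply rsum_le_strict with (M := M)|].
      * intros s Hs'; apply (Hs s Hs').
      * exists s0; split; auto. apply (Hs s0 Hs0); auto.
      * rewrite len_steps, mult_INR. simpl INR at 2.
        unfold M. rewrite kk_cons by auto. rewrite E. destruct (kk B V) as [|k]; [lia|]. simpl.
        replace (k - 0)%nat with k by lia.
        replace (INR d * (1 + 1) - 1) with (2 * INR d * c) by (unfold c; field; lra).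
        right. clear -Hc. clearbody c. unfold Rdiv. ring.
    + eapply Rle_trans; [apply rsum_le_const with (M := M)|].
      * intros s Hs'; apply (Hs s Hs').
      * rewrite len_steps, mult_INR. unfold M. rewrite kk_cons by auto. rewrite E. replace (kk B V - 0)%nat with (kk B V) by lia.
        simpl. right. clear -Hc. clearbody c. unfold Rdiv. ring.
Qed.

Lemma kk_nil B : kk B [] = length B.
Proof. unfold kk; induction B; simpl; auto. Qed.

Lemma walk_in x p : In x (walk_pts x p).
Proof. destruct p; simpl; auto. Qed.

Lemma prob_bound d n p (hd : (1 <= d)%nat) : In p (paths d n) ->
  0 < prob_range d n p <=
  (1 - / (2 * INR d)) ^ (boundary_size d (range d p)) / (1 - / (2 * INR d)).
Proof.
  intros Hp.
  set (A := range d p).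
  set (bp := fun z => existsb (fun s => negb (inb (move z s) A)) (steps d)).
  set (B := filter bp (nodup (list_eq_dec Z.eq_dec) A)).
  assert (Hd : 1 <= INR d) by (apply (le_INR 1); auto).
  assert (HN : NoDup B) by (apply NoDup_filter, NoDup_nodup).
  assert (HB : forall z, In z B -> exists s, In s (steps d) /\ inb (move z s) A = false).
  { intros z Hz. apply filter_In in Hz as [_ Hz]. unfold bp in Hz.
    apply existsb_exists in Hz as [s [Hs Hs2]]. exists s; split; auto.
    destruct (inb (move z s) A); auto; discriminate. }
  assert (Hcnt := cnt_bound d A B hd HN HB n [] (origin d)).
  rewrite kk_nil in Hcnt.
  assert (HbB : length B = boundary_size d A) by reflexivity.
  rewrite HbB in Hcnt.
  assert (Hle : (length (filter (fun q => same_set (range d q) (range d p)) (paths d n))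
                 <= cnt d A B [] (origin d) n)%nat).
  { unfold cnt. apply filter_mono. intros q Hq. unfold same_set in Hq.
    apply andb_prop in Hq as [H1 H2]. fold A in H1, H2. unfold all_in. simpl.
    unfold range in H1, H2. rewrite H1; simpl.
    rewrite forallb_forall in *. intros z Hz. apply H2.
    unfold B in Hz. apply filter_In in Hz as [Hz _]. apply nodup_In in Hz; auto. }
  assert (Hpos : (1 <= length (filter (fun q => same_set (range d q) (range d p)) (paths d n)))%nat).
  { assert (HI : In p (filter (fun q => same_set (range d q) (range d p)) (paths d n))).
    { apply filter_In; split; auto. unfold same_set.
      assert (forallb (fun x => inb x (range d p)) (range d p) = true).
      { apply forallb_forall; intros; apply inb_In; auto. }
      rewrite H; reflexivity. }
    revert HI. generalize (filter (fun q => same_set (range d q) (range d p)) (paths d n)).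
    intros l HI; destruct l; simpl in *; [destruct HI|lia]. }
  assert (HN2 : npaths d n = (2 * INR d) ^ n).
  { unfold npaths. rewrite len_paths, pow_INR, mult_INR. simpl. f_equal. ring. }
  assert (HNp : 0 < (2 * INR d) ^ n) by (apply pow_lt; lra).
  unfold prob_range. rewrite HN2. split.
  - apply Rdiv_lt_0_compat; auto. apply lt_0_INR; lia.
  - apply le_INR in Hle. unfold Rdiv in *.
    apply Rmult_le_reg_r with ((2 * INR d) ^ n); auto.
    set (K := INR (length (filter (fun q => same_set (range d q) (range d p)) (paths d n)))) in *.
    set (X := (2 * INR d) ^ n) in *. set (Y := (1 - / (2 * INR d)) ^ boundary_size d A) in *.
    set (Z := / (1 - / (2 * INR d))) in *.
    replace (K * / X * X) with K by (field; lra).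
    replace (Y * Z * X) with (X * Y * Z) by ring. lra.
Qed.

Theorem mainTheorem3 (d n : nat) (hd : (1 <= d)%nat) :
  range_entropy d n >= - log2 (1 - / (2 * INR d)) * exp_boundary_minus1 d n.
Proof.
  assert (Hd : 1 <= INR d) by (apply (le_INR 1); auto).
  set (c := 1 - / (2 * INR d)).
  assert (Hc : 0 < c /\ c <= 1).
  { unfold c. assert (0 < / (2 * INR d) <= /2).
    { split; [apply Rinv_0_lt_compat; lra|apply Rinv_le_contravar; lra]. } lra. }
  assert (HN : 0 < npaths d n).
  { unfold npaths. rewrite len_paths. apply lt_0_INR. apply Nat.neq_0_lt_0, Nat.pow_nonzero. lia. }
  assert (Hl2 : 0 < ln 2) by (pose proof ln_lt_2; lra).
  unfold range_entropy, exp_boundary_minus1. rewrite <- rsum_scal.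
  apply Rle_ge, rsum_le. intros p Hp.
  destruct (prob_bound d n p hd Hp) as [Hp1 Hp2]. fold c in Hp2.
  set (b := boundary_size d (range d p)) in *.
  set (pr := prob_range d n p) in *.
  assert (Hln : ln pr <= (INR b - 1) * ln c).
  { assert (E : ln (c ^ b / c) = (INR b - 1) * ln c).
    { unfold Rdiv. rewrite ln_mult, ln_Rinv, ln_pow by (try apply pow_lt; try apply Rinv_0_lt_compat; lra). ring. }
    rewrite <- E. destruct Hp2 as [Hlt|Heq]; [left; apply ln_increasing; auto|rewrite Heq; right; reflexivity]. }
  assert (HiN : 0 < / npaths d n) by (apply Rinv_0_lt_compat; auto).
  assert (E : / npaths d n * (- log2 pr) - (- log2 c * (/ npaths d n * (INR b - 1))) =
              / npaths d n * / ln 2 * ((INR b - 1) * ln c - ln pr)).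
  { unfold log2. field. lra. }
  assert (0 <= / npaths d n * / ln 2 * ((INR b - 1) * ln c - ln pr)).
  { apply Rmult_le_pos; [apply Rmult_le_pos; [lra|left; apply Rinv_0_lt_compat; lra]|lra]. }
  lra.
Qed.
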